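(* Let $\{(G_n,\Psi_n,\varphi^L_n,\varphi^U_n)\}_{n\ge0}$ be an $\mathcal{F}$-system (with $\varphi^L_n<\varphi^U_n$ on $G_n$) satisfying Condition $\Gamma$, with induced Cantor system $(X,H_X)$ and associated fence $\mathbf{F}_\Phi$. Then there exists a continuous surjection $T:\mathbf{F}_\Phi\to\mathbf{F}_\Phi$, having $H_X$ as a factor, given by $T(x,t)=(H_X(x),s(x,t))$. Moreover, if the system additionally satisfies Condition $\Gamma^+$ and $H_X$ is a homeomorphism of $X$, then $T$ is a homeomorphism of $\mathbf{F}_\Phi$.
   Context: An $\mathcal{F}$-system consists of: finite directed graphs $G_n$ ($n\ge0$), each vertex having at least one outgoing and one incoming edge; surjective maps $\Psi_n:G_{n+1}\to G_n$ sending edges to edges; such that (i) for each $n$ and $v\in G_n$ there are $m>n$ and distinct $v',v''\in G_{m+1}$ with $\Psi_n\circ\cdots\circ\Psi_m(v')=\Psi_n\circ\cdots\circ\Psi_m(v'')=v$; (ii) for every $m$ there is $n>m$ such that for every $g\in G_n$ the set $\{\Psi_m\circ\cdots\circ\Psi_{n-1}(g'):\overrightarrow{gg'}\in G_n\}$ has exactly one element; and maps $\varphi^L_n,\varphi^U_n:G_n\to[0,1]$ with $\varphi^L_n\le\varphi^U_n$, $\varphi^U_{n+1}(v')\le\varphi^U_n(\Psi_n(v'))$, $\varphi^L_{n+1}(v')\ge\varphi^L_n(\Psi_n(v'))$, and such that for every $g\in G_n$ there is $g'\in G_{n+1}$ with $\Psi_n(g')=g$, $\varphi^L_{n+1}(g')=\varphi^L_n(g)$,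 $\varphi^U_{n+1}(g')=\varphi^U_n(g)$. $X=\{x\in\prod_n G_n: x(n)=\Psi_n(x(n+1))\ \forall n\}$; $H_X:X\to X$ is the continuous surjection whose graph is $\{(x,y)\in X^2:\overrightarrow{x(n)y(n)}\in G_n\ \forall n\}$. $\varphi^U(x)=\lim_n\varphi^U_n(x(n))$, $\varphi^L(x)=\lim_n\varphi^L_n(x(n))$, $\Phi=(\varphi^L,\varphi^U)$, $\mathbf{F}_\Phi=\{(x,t)\in X\times[0,1]:\varphi^L(x)\le t\le\varphi^U(x)\}$. ''Having $H_X$ as a factor'' means $\pi\circ T=H_X\circ\pi$ for $\pi(x,t)=x$. For $u,v\in G_n$ let $s_n(u,v)$ be the increasing affine map of $[\varphi^L_n(u),\varphi^U_n(u)]$ onto $[\varphi^L_n(v),\varphi^U_n(v)]$: $s_n(u,v)(t)=\frac{\varphi^U_n(v)-\varphi^L_n(v)}{\varphi^U_n(u)-\varphi^L_n(u)}(t-\varphi^L_n(u))+\varphi^L_n(v)$. For an edge $\overrightarrow{uv}\in G_n$: $\Gamma_n(\overrightarrow{uv})=\max\{|s_n(u,v)(t)-s_{n+1}(u',v')(t)| : \overrightarrow{u'v'}\in G_{n+1},\Psi_n(u')=u,\Psi_n(v')=v,\ t\in[\varphi^L_{n+1}(u'),\varphi^U_{n+1}(u')]\}$ and $\Gamma^+_n(\overrightarrow{uv})=\max\{|s_n(v,u)(t)-s_{n+1}(v',u')(t)| : \overrightarrow{u'v'}\in G_{n+1},\Psi_n(u')=u,\Psi_n(v')=v,\ t\in[\varphi^L_{n+1}(v'),\varphi^U_{n+1}(v')]\}$;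 $\Gamma_n=\max\Gamma_n(\overrightarrow{uv})$, $\Gamma^+_n=\max\Gamma^+_n(\overrightarrow{uv})$. Condition $\Gamma$: $\sum_n\Gamma_n<\infty$; Condition $\Gamma^+$: $\sum_n\Gamma^+_n<\infty$. Finally $s:\mathbf{F}_\Phi\to\mathbb{R}$, $s(x,t)=\lim_n s_n(x(n),H_X(x)(n))(t)$ (the limit exists uniformly under Condition $\Gamma$). *)

(* Defs.v *)
From HB Require Import structures.
From mathcomp Require Import all_boot all_order all_algebra.
From mathcomp Require Import all_classical all_reals all_analysis.

Import Order.TTheory GRing.Theory Num.Theory.
Import numFieldNormedType.Exports.
Local Open Scope classical_set_scope.
Local Open Scope ring_scope.

Record FData (R : realType) := {
  vert : nat -> finType;
  edge : forall n, rel (vert n);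
  Psi : forall n, vert n.+1 -> vert n;
  phiL : forall n, vert n -> R;
  phiU : forall n, vert n -> R }.
Arguments vert {R} _ _.
Arguments edge {R} _ _.
Arguments Psi {R} _ _.
Arguments phiL {R} _ _.
Arguments phiU {R} _ _.

Fixpoint psik {R : realType} (S : FData R) (n k : nat) : vert S (k + n) -> vert S n :=
  match k return vert S (k + n) -> vert S n with
  | 0 => fun v => v
  | k'.+1 => fun v => psik S n k' (Psi S (k' + n) v)
  end.

Definition is_Fsystem {R : realType} (S : FData R) : Prop :=
  [/\
      (forall n (v : vert S n), (exists w, edge S n v w) /\ (exists u, edge S n u v)),
      (forall n (v : vert S n), exists v' : vert S n.+1, Psi S n v' = v) /\
      (forall n (u v : vert S n.+1), edge S n.+1 u v -> edge S n (Psi S n u) (Psi S n v)),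
      (* condition (i): with m + 1 = k + n, m > n iff 1 < k *)
      (forall n (v : vert S n), exists k, (1 < k)%N /\
         exists v' v'' : vert S (k + n),
           v' <> v'' /\ psik S n k v' = v /\ psik S n k v'' = v),
      (* condition (ii): with n = k + m, n > m iff 0 < k *)
      (forall m, exists k, (0 < k)%N /\ forall g : vert S (k + m),
         exists w : vert S m,
           (exists g', edge S (k + m) g g' /\ psik S m k g' = w) /\
           (forall g', edge S (k + m) g g' -> psik S m k g' = w)) &
      [/\ (forall n v, 0 <= phiL S n v /\ phiL S n v <= phiU S n v /\ phiU S n v <= 1),
          (forall n (v' : vert S n.+1), phiU S n.+1 v' <= phiU S n (Psi S n v')),
          (forall n (v' : vert S n.+1), phiL S n (Psi S n v') <= phiL S n.+1 v') &
          (forall n (g : vert S n), exists g' : vert S n.+1,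
             [/\ Psi S n g' = g, phiL S n.+1 g' = phiL S n g & phiU S n.+1 g' = phiU S n g])]].

Definition VT {R : realType} (S : FData R) (n : nat) : uniformType :=
  discrete_topology (vert S n).

Definition Pt {R : realType} (S : FData R) : topologicalType := prod_topology (fun n => VT S n).

Definition Xset {R : realType} (S : FData R) : set (Pt S) :=
  [set x | forall n, x n = Psi S n (x n.+1)].

Definition HXrel {R : realType} (S : FData R) (x y : Pt S) : Prop :=
  Xset S x /\ Xset S y /\ forall n, edge S n (x n) (y n).

(* H_X : the (under the F-system axioms unique) y with (x, y) in the
   graph; an arbitrary value (x itself) when there is none *)
Definition HX {R : realType} (S : FData R) (x : Pt S) : Pt S :=
  match pselect (exists y, HXrel S x y) with
  | left h => proj1_sig (cid h)
  | right _ => x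
  end.

Definition phiUlim {R : realType} (S : FData R) (x : Pt S) : R :=
  limn (fun n => phiU S n (x n)).
Definition phiLlim {R : realType} (S : FData R) (x : Pt S) : R :=
  limn (fun n => phiL S n (x n)).

Definition Fence {R : realType} (S : FData R) : set (Pt S * R) :=
  [set p | Xset S p.1 /\ phiLlim S p.1 <= p.2 /\ p.2 <= phiUlim S p.1].

Definition sn {R : realType} (S : FData R) (n : nat) (u v : vert S n) (t : R) : R :=
  (phiU S n v - phiL S n v) / (phiU S n u - phiL S n u) * (t - phiL S n u)
  + phiL S n v.

(* Gamma_n = max over edges uv of G_n of Gamma_n(uv); the max of the
   finite union of the (compact) sets below is its supremum *)
Definition GammaSet {R : realType} (S : FData R) (n : nat) : set R :=
  [set r | exists (u v : vert S n) (u' v' : vert S n.+1) (t : R),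
     [/\ edge S n u v /\ edge S n.+1 u' v', Psi S n u' = u, Psi S n v' = v,
         phiL S n.+1 u' <= t /\ t <= phiU S n.+1 u' &
         r = `| sn S n u v t - sn S n.+1 u' v' t |]].
Definition Gamma {R : realType} (S : FData R) (n : nat) : R := sup (GammaSet S n).

Definition GammaPlusSet {R : realType} (S : FData R) (n : nat) : set R :=
  [set r | exists (u v : vert S n) (u' v' : vert S n.+1) (t : R),
     [/\ edge S n u v /\ edge S n.+1 u' v', Psi S n u' = u, Psi S n v' = v,
         phiL S n.+1 v' <= t /\ t <= phiU S n.+1 v' &
         r = `| sn S n v u t - sn S n.+1 v' u' t |]].
Definition GammaPlus {R : realType} (S : FData R) (n : nat) : R :=
  sup (GammaPlusSet S n).

Definition CondGamma {R : realType} (S : FData R) : Prop :=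
  (\sum_(0 <= n <oo) (Gamma S n)%:E < +oo)%E.
Definition CondGammaPlus {R : realType} (S : FData R) : Prop :=
  (\sum_(0 <= n <oo) (GammaPlus S n)%:E < +oo)%E.

Definition sfun {R : realType} (S : FData R) (x : Pt S) (t : R) : R :=
  limn (fun n => sn S n (x n) (HX S x n) t).

Definition Tmap {R : realType} (S : FData R) (p : Pt S * R) : Pt S * R :=
  (HX S p.1, sfun S p.1 p.2).

Definition homeo_on {U : topologicalType} (A : set U) (f : U -> U) : Prop :=
  [/\ (forall a, A a -> A (f a)), {within A, continuous f} &
      exists g : U -> U,
        [/\ (forall a, A a -> A (g a)),
            (forall a, A a -> g (f a) = a),
            (forall a, A a -> f (g a) = a) &
            {within A, continuous g}]].

(* Main.v *)
Require Import Defs.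
From HB Require Import structures.
From mathcomp Require Import all_boot all_order all_algebra.
From mathcomp Require Import all_classical all_reals all_analysis.
From mathcomp Require Import ring lra.
Import Order.TTheory GRing.Theory Num.Theory.
Import numFieldNormedType.Exports.
Local Open Scope classical_set_scope.
Local Open Scope ring_scope.


Lemma limn_eq {R : realType} {u : R^nat} {l : R} : u @ \oo --> l -> limn u = l.
Proof. by move=> h; apply/cvg_lim. Qed.

Section Seq.
Set Default Proof Using "All".
Variable R : realType.
Variables a b c d g : nat -> R.
Definition affs (n : nat) (t : R) : R := (d n - c n) / (b n - a n) * (t - a n) + c n.
Hypothesis hab : forall n, a n < b n.
Hypothesis hcd : forall n, c n < d n.
Hypothesis ha : forall n, a n <= a n.+1.
Hypothesis hb : forall n, b n.+1 <= b n.
Hypothesis hc : forall n, c n <= c n.+1.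
Hypothesis hd : forall n, d n.+1 <= d n.
Hypothesis hg0 : forall n, 0 <= g n.
Hypothesis hgc : cvgn (series g).
Hypothesis hstep : forall n t, a n.+1 <= t -> t <= b n.+1 ->
  `|affs n t - affs n.+1 t| <= g n.

Lemma ndA : nondecreasing_seq a. Proof. exact/nondecreasing_seqP. Qed.
Lemma niB : nonincreasing_seq b. Proof. exact/nonincreasing_seqP. Qed.
Lemma ndC : nondecreasing_seq c. Proof. exact/nondecreasing_seqP. Qed.
Lemma niD : nonincreasing_seq d. Proof. exact/nonincreasing_seqP. Qed.

Lemma a_le_b m n : a m <= b n.
Proof.
have [mn|nm] := leqP m n.
  by apply: le_trans (ltW (hab n)); apply: ndA.
by apply: le_trans (ltW (hab m)) _; apply: niB; apply: ltnW.
Qed.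
Lemma c_le_d m n : c m <= d n.
Proof.
have [mn|nm] := leqP m n.
  by apply: le_trans (ltW (hcd n)); apply: ndC.
by apply: le_trans (ltW (hcd m)) _; apply: niD; apply: ltnW.
Qed.

Lemma cvg_sa : cvgn a.
Proof. apply: nondecreasing_is_cvgn; first exact: ndA.
by exists (b 0) => _ [n _ <-]; apply: a_le_b. Qed.
Lemma cvg_sb : cvgn b.
Proof. apply: nonincreasing_is_cvgn; first exact: niB.
by exists (a 0) => _ [n _ <-]; apply: a_le_b. Qed.
Lemma cvg_sc : cvgn c.
Proof. apply: nondecreasing_is_cvgn; first exact: ndC.
by exists (d 0) => _ [n _ <-]; apply: c_le_d. Qed.
Lemma cvg_sd : cvgn d.
Proof. apply: nonincreasing_is_cvgn; first exact: niD.
by exists (c 0) => _ [n _ <-]; apply: c_le_d. Qed.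

Lemma aA n : a n <= limn a. Proof. exact: nondecreasing_cvgn_le ndA cvg_sa n. Qed.
Lemma Bb n : limn b <= b n. Proof. exact: nonincreasing_cvgn_ge niB cvg_sb n. Qed.
Lemma cC n : c n <= limn c. Proof. exact: nondecreasing_cvgn_le ndC cvg_sc n. Qed.
Lemma Dd n : limn d <= d n. Proof. exact: nonincreasing_cvgn_ge niD cvg_sd n. Qed.

Lemma AB : limn a <= limn b.
Proof. apply: limr_le; first exact: cvg_sa. near=> n; apply: limr_ge; first exact: cvg_sb.
by near=> k; apply: a_le_b.
Unshelve. all: end_near. Qed.
Lemma CD : limn c <= limn d.
Proof. apply: limr_le; first exact: cvg_sc. near=> n; apply: limr_ge; first exact: cvg_sd.
by near=> k; apply: c_le_d.
Unshelve. all: end_near. Qed.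

Lemma affs_range n t : a n <= t -> t <= b n -> c n <= affs n t <= d n.
Proof.
move=> h1 h2; rewrite /affs.
have hr : 0 <= (d n - c n) / (b n - a n).
  by apply: divr_ge0; rewrite subr_ge0; apply: ltW.
apply/andP; split.
  by rewrite lerDr; apply: mulr_ge0 => //; rewrite subr_ge0.
have hba : b n - a n != 0 by rewrite subr_eq0 gt_eqF // hab.
have e : (d n - c n) / (b n - a n) * (b n - a n) = d n - c n by rewrite divfK.
have : (d n - c n) / (b n - a n) * (t - a n) <= (d n - c n) / (b n - a n) * (b n - a n).
  by apply: ler_wpM2l => //; rewrite lerD2r.
rewrite e; lra.
Qed.

Definition tl m := limn (series g) - series g m.

Lemma series_nd : nondecreasing_seq (series g).
Proof. apply/nondecreasing_seqP => n; rewrite seriesSr lerDl; exact: hg0. Qed.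

Lemma tl_ge0 m : 0 <= tl m.
Proof. by rewrite /tl subr_ge0; apply: nondecreasing_cvgn_le series_nd hgc m. Qed.

Lemma tl_cvg0 : tl @ \oo --> 0.
Proof.
rewrite /tl -(subrr (limn (series g))).
apply: cvgB; first exact: cvg_cst. exact: hgc.
Qed.

Lemma tele m k t : a (m + k)%N <= t -> t <= b (m + k)%N ->
  `|affs m t - affs (m + k)%N t| <= series g (m + k)%N - series g m.
Proof.
elim: k => [|k IH] h1 h2; first by rewrite addn0 !subrr normr0.
rewrite addnS in h1 h2 *.
have h1' : a (m + k)%N <= t by apply: le_trans (ha _) h1.
have h2' : t <= b (m + k)%N by apply: le_trans h2 (hb _).
have := IH h1' h2'; have := hstep _ _ h1 h2; rewrite seriesSr => s1 s2.
apply: le_trans (ler_distD (affs (m + k) t) _ _) _.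
lra.
Qed.

Section AtT.
Variable t : R.
Hypothesis ht1 : limn a <= t.
Hypothesis ht2 : t <= limn b.
Let htn1 n : a n <= t. Proof. exact: le_trans (aA n) ht1. Qed.
Let htn2 n : t <= b n. Proof. exact: le_trans ht2 (Bb n). Qed.

Let u n := affs n t + series g n.
Let v n := affs n t - series g n.

Let u_nd : nondecreasing_seq u.
Proof.
apply/nondecreasing_seqP => n; rewrite /u seriesSr.
have := hstep _ _ (htn1 n.+1) (htn2 n.+1); rewrite ler_norml => /andP[h1 h2]; lra.
Qed.
Let v_ni : nonincreasing_seq v.
Proof.
apply/nonincreasing_seqP => n; rewrite /v seriesSr.
have := hstep _ _ (htn1 n.+1) (htn2 n.+1); rewrite ler_norml => /andP[h1 h2]; lra.
Qed.
Let Sle n : series g n <= limn (series g).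
Proof. exact: nondecreasing_cvgn_le series_nd hgc n. Qed.
Let S0 n : 0 <= series g n.
Proof. by rewrite /series /=; apply: sumr_ge0 => i _; apply: hg0. Qed.

Let cvg_u : cvgn u.
Proof.
apply: nondecreasing_is_cvgn; first exact: u_nd.
exists (d 0 + limn (series g)) => _ [n _ <-]; rewrite /u.
apply: lerD; last exact: Sle.
have /andP[_ h] := affs_range _ _ (htn1 n) (htn2 n); apply: le_trans h _.
exact: niD.
Qed.
Let cvg_v : cvgn v.
Proof.
apply: nonincreasing_is_cvgn; first exact: v_ni.
exists (c 0 - limn (series g)) => _ [n _ <-]; rewrite /v.
apply: lerB; last exact: Sle.
have /andP[h _] := affs_range _ _ (htn1 n) (htn2 n); apply: le_trans _ h.
exact: ndC.
Qed.

Lemma cvg_affs : cvgn (affs^~ t).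
Proof.
have -> : affs^~ t = u - series g by apply/funext => n; rewrite /u /= addrK.
by apply: is_cvgB; [exact: cvg_u | exact: hgc].
Qed.

Lemma affs_tail m : `|limn (affs^~ t) - affs m t| <= tl m.
Proof.
have E1 : limn (affs^~ t) = limn u - limn (series g).
  have -> : affs^~ t = u - series g by apply/funext => n; rewrite /u /= addrK.
  by rewrite limB //; exact: cvg_u.
have E2 : limn (affs^~ t) = limn v + limn (series g).
  have -> : affs^~ t = v + series g by apply/funext => n; rewrite /v /= subrK.
  by rewrite limD //; exact: cvg_v.
have h1 := nondecreasing_cvgn_le u_nd cvg_u m.
have h2 := nonincreasing_cvgn_ge v_ni cvg_v m.
rewrite /u /v /tl in h1 h2 *.
rewrite ler_norml; apply/andP; split; lra.
Qed.

Lemma affs_range_lim : limn c <= limn (affs^~ t) <= limn d.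
Proof.
apply/andP; split.
  apply: limr_le; first exact: cvg_sc.
  near=> n; apply: limr_ge; first exact: cvg_affs.
  near=> k; have /andP[h _] := affs_range _ _ (htn1 k) (htn2 k).
  apply: le_trans h; apply: ndC; near: k; exact: nbhs_infty_ge.
apply: limr_ge; first exact: cvg_sd.
near=> n; apply: limr_le; first exact: cvg_affs.
near=> k; have /andP[_ h] := affs_range _ _ (htn1 k) (htn2 k).
apply: le_trans h _; apply: niD; near: k; exact: nbhs_infty_ge.
Unshelve. all: end_near. Qed.

End AtT.

Lemma le_tl0 x : (forall m, x <= tl m + tl m) -> x <= 0.
Proof.
move=> h.
have cv : (fun m => tl m + tl m) @ \oo --> 0 + 0.
  by apply: cvgD; exact: tl_cvg0.
rewrite addr0 in cv; rewrite -(limn_eq cv).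
by apply: limr_ge; [exact: cvgP cv | near=> m; exact: h].
Unshelve. all: end_near. Qed.

Lemma affs_lim_end (e f : nat -> R) : (forall n, affs n (e n) = f n) ->
  (forall n, a n <= e n <= b n) -> cvgn e -> cvgn f ->
  limn a <= limn e -> limn e <= limn b ->
  limn (affs^~ (limn e)) = limn f.
Proof.
move=> hef her ce cf h1 h2.
have key m : `|affs m (limn e) - limn f| <= tl m.
  have cv : (fun N => affs m (e N) - f N) @ \oo --> affs m (limn e) - limn f.
    apply: cvgB; last exact: cf.
    rewrite /affs; apply: cvgD; last exact: cvg_cst.
    apply: cvgM; first exact: cvg_cst.
    by apply: cvgB; [exact: ce | exact: cvg_cst].
  have hN N : (m <= N)%N -> `|affs m (e N) - f N| <= tl m.
    move=> mN; rewrite -(subnKC mN) -hef.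
    have /andP[e1 e2] := her (m + (N - m))%N.
    apply: le_trans (tele _ _ _ e1 e2) _.
    rewrite /tl lerD2r; exact: nondecreasing_cvgn_le series_nd hgc _.
  rewrite -(limn_eq cv) ler_norml; apply/andP; split.
    apply: limr_ge; first exact: cvgP cv.
    near=> N; have := hN N; rewrite ler_norml => /(_ _)/andP[] //.
    by near: N; exact: nbhs_infty_ge.
  apply: limr_le; first exact: cvgP cv.
  near=> N; have := hN N; rewrite ler_norml => /(_ _)/andP[] //.
  by near: N; exact: nbhs_infty_ge.
have : `|limn (affs^~ (limn e)) - limn f| <= 0.
  apply: le_tl0 => m.
  apply: le_trans (ler_distD (affs m (limn e)) _ _) _.
  apply: lerD; last exact: key.
  apply: affs_tail.
    by apply: le_trans h1 _.
  exact: h2.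
by rewrite normr_le0 subr_eq0 => /eqP.
Unshelve. all: end_near. Qed.

Lemma affs_limA : limn (affs^~ (limn a)) = limn c.
Proof.
apply: affs_lim_end.
- by move=> n; rewrite /affs subrr mulr0 add0r.
- by move=> n; rewrite lexx /= ltW.
- exact: cvg_sa.
- exact: cvg_sc.
- exact: lexx.
- exact: AB.
Qed.

Lemma affs_limB : limn (affs^~ (limn b)) = limn d.
Proof.
apply: affs_lim_end.
- move=> n; rewrite /affs divfK ?subrK //.
  by rewrite subr_eq0 gt_eqF // hab.
- by move=> n; rewrite lexx andbT ltW.
- exact: cvg_sb.
- exact: cvg_sd.
- exact: AB.
- exact: lexx.
Qed.

Lemma affs_formula t : limn a < limn b ->
  limn (affs^~ t) = (limn d - limn c) / (limn b - limn a) * (t - limn a) + limn c.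
Proof.
move=> hlt; apply: limn_eq; rewrite /affs.
apply: cvgD; last exact: cvg_sc.
apply: cvgM; last by apply: cvgB; [exact: cvg_cst | exact: cvg_sa].
apply: cvgM; first by apply: cvgB; [exact: cvg_sd | exact: cvg_sc].
apply: cvgV; first by rewrite subr_eq0 gt_eqF.
by apply: cvgB; [exact: cvg_sb | exact: cvg_sa].
Qed.

Lemma AB_CD : limn a = limn b -> limn c = limn d.
Proof. by move=> e; rewrite -affs_limA -affs_limB e. Qed.

Lemma affs_surj r : limn c <= r -> r <= limn d ->
  exists t, [/\ limn a <= t, t <= limn b & limn (affs^~ t) = r].
Proof.
move=> h1 h2.
have [ecd|ltcd] := eqVneq (limn c) (limn d).
  exists (limn a); split; [exact: lexx | exact: AB |].
  by rewrite affs_limA; apply/eqP; rewrite eq_le h1 ecd h2.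
have ltab : limn a < limn b.
  rewrite lt_neqAle AB andbT; apply/eqP => /AB_CD e.
  by rewrite e eqxx in ltcd.
have cd : limn c < limn d by rewrite lt_neqAle ltcd CD.
set A := limn a in ltab *; set B := limn b in ltab *.
set C := limn c in cd h1 *; set D := limn d in cd h2 *.
exists ((B - A) / (D - C) * (r - C) + A); split.
- rewrite lerDr; apply: mulr_ge0; last by rewrite subr_ge0.
  by apply: divr_ge0; rewrite subr_ge0 ltW.
- have hDC : 0 < D - C by rewrite subr_gt0.
  have : (B - A) / (D - C) * (r - C) <= (B - A) / (D - C) * (D - C).
    apply: ler_wpM2l; first by apply: divr_ge0; rewrite subr_ge0 ltW.
    by rewrite lerD2r.
  rewrite divfK ?gt_eqF //; lra.
- rewrite affs_formula // -/A -/B -/C -/D.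
  have hDC : D - C != 0 by rewrite subr_eq0 gt_eqF.
  have hBA : B - A != 0 by rewrite subr_eq0 gt_eqF.
  have E : forall (A B C D r : R), D - C != 0 -> B - A != 0 ->
    (D - C) / (B - A) * ((B - A) / (D - C) * (r - C) + A - A) + C = r.
    by move=> A' B' C' D' r' h3 h4; field; rewrite h3 h4.
  exact: E.
Qed.

End Seq.
Arguments affs {R}.
Arguments tl {R}.

Section Pair.
Variable R : realType.
Variables a b c d g g' : nat -> R.
Hypothesis hab : forall n, a n < b n.
Hypothesis hcd : forall n, c n < d n.
Hypothesis ha : forall n, a n <= a n.+1.
Hypothesis hb : forall n, b n.+1 <= b n.
Hypothesis hc : forall n, c n <= c n.+1.
Hypothesis hd : forall n, d n.+1 <= d n.
Hypothesis hg0 : forall n, 0 <= g n.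
Hypothesis hgc : cvgn (series g).
Hypothesis hstep : forall n t, a n.+1 <= t -> t <= b n.+1 ->
  `|affs a b c d n t - affs a b c d n.+1 t| <= g n.
Hypothesis hg0' : forall n, 0 <= g' n.
Hypothesis hgc' : cvgn (series g').
Hypothesis hstep' : forall n t, c n.+1 <= t -> t <= d n.+1 ->
  `|affs c d a b n t - affs c d a b n.+1 t| <= g' n.

Lemma pair_inv t : limn a <= t -> t <= limn b ->
  limn (affs c d a b ^~ (limn (affs a b c d ^~ t))) = t.
Proof.
move=> h1 h2.
have fA := affs_limA _ _ _ _ _ _ hab hcd ha hb hc hd hg0 hgc hstep.
have fB := affs_limB _ _ _ _ _ _ hab hcd ha hb hc hd hg0 hgc hstep.
have bA := affs_limA _ _ _ _ _ _ hcd hab hc hd ha hb hg0' hgc' hstep'.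
have bB := affs_limB _ _ _ _ _ _ hcd hab hc hd ha hb hg0' hgc' hstep'.
have AB := AB _ _ _ _ _ _ hab hcd ha hb hc hd hg0 hgc hstep.
have CD := CD _ _ _ _ _ _ hab hcd ha hb hc hd hg0 hgc hstep.
have [eab|nab] := eqVneq (limn a) (limn b).
  have et : t = limn a by apply/eqP; rewrite eq_le h1 eab h2.
  have ecd : limn c = limn d by rewrite -fA -fB eab.
  by rewrite et fA bA.
have ncd : limn c != limn d.
  by apply: contra nab => /eqP e; rewrite -bA -bB e.
have ltab : limn a < limn b by rewrite lt_neqAle nab AB.
have ltcd : limn c < limn d by rewrite lt_neqAle ncd CD.
rewrite (affs_formula _ _ _ _ _ _ hcd hab hc hd ha hb hg0' hgc' hstep' _ ltcd).
rewrite (affs_formula _ _ _ _ _ _ hab hcd ha hb hc hd hg0 hgc hstep _ ltab).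
have E : forall (A B C D r : R), D - C != 0 -> B - A != 0 ->
  (B - A) / (D - C) * ((D - C) / (B - A) * (r - A) + C - C) + A = r.
  by move=> A' B' C' D' r' h3 h4; field; rewrite h3 h4.
by apply: E; rewrite subr_eq0 eq_sym.
Qed.

End Pair.


Section Top.
Variable R : realType. Variable S : FData R.

Lemma nbhs_cyl (x : Pt S) m : nbhs x (fun z : Pt S => z m = x m).
Proof.
have : open (proj m @^-1` [set x m] : set (Pt S)).
  apply: open_comp; [move=> + _; exact: proj_continuous | apply: discrete_open].
move=> op; apply: open_nbhs_nbhs; split => //.
Qed.

Lemma cvg_Pt (T : Type) (F : set_system T) {FF : Filter F} (f : T -> Pt S) (y : Pt S) :
  (forall m, \forall q \near F, f q m = y m) -> f @ F --> y.
Proof.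
move=> h.
apply/cvg_sup => i.
move=> W [B [oB By] BW].
case: oB => A oA eA.
rewrite -eA in By BW.
have := h i; rewrite /= nbhs_simpl; apply: filterS => q e.
by apply: BW; rewrite /= e.
Qed.
End Top.
Arguments nbhs_cyl {R S}.
Arguments cvg_Pt {R S T F FF}.


Lemma fin_bound (T : finType) (P : nat -> T -> Prop) :
  (forall t k k', (k <= k')%N -> P k' t -> P k t) ->
  ~ (exists t, forall k, P k t) -> exists K, forall t, ~ P K t.
Proof.
move=> mono H.
have H' : forall t, exists k, ~ P k t.
  move=> t; apply: contrapT => H2; apply: H; exists t => k.
  by apply: contrapT => H3; apply: H2; exists k.
pose f t := projT1 (cid (H' t)).
exists (\big[maxn/0%N]_t f t) => t Pt.
have hle : (f t <= \big[maxn/0%N]_t f t)%N := @leq_bigmax _ f t.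
exact: (projT2 (cid (H' t))) (mono t _ _ hle Pt).
Qed.

Section Comb.
Variable R : realType. Variable S : FData R.
Hypothesis HF : is_Fsystem S.

Lemma Psi_edge n u v : edge S n.+1 u v -> edge S n (Psi S n u) (Psi S n v).
Proof. by case: HF => _ [_ h] _ _ _; apply: h. Qed.
Lemma out_edge n v : exists w, edge S n v w.
Proof. by case: HF => h _ _ _ _; case: (h n v). Qed.
Lemma in_edge n v : exists u, edge S n u v.
Proof. by case: HF => h _ _ _ _; case: (h n v). Qed.
Lemma condii m : exists k, (0 < k)%N /\ forall g : vert S (k + m),
         exists w : vert S m,
           (exists g', edge S (k + m) g g' /\ psik S m k g' = w) /\
           (forall g', edge S (k + m) g g' -> psik S m k g' = w).
Proof. by case: HF => _ _ _ h _; apply: h. Qed.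

Lemma psik_X {x : Pt S} m k : Xset S x -> psik S m k (x (k + m)%N) = x m.
Proof.
move=> hx; elim: k => [//|k IH] /=.
by rewrite -hx.
Qed.

Lemma psik_edge m k g g' : edge S (k + m) g g' ->
  edge S m (psik S m k g) (psik S m k g').
Proof.
elim: k g g' => [//|k IH] g g' e /=.
by apply: IH; apply: Psi_edge.
Qed.

Section Konig.
Variable A : forall n, vert S n -> Prop.
Hypothesis A_ne : forall n, exists v, A n v.
Hypothesis A_down : forall n w, A n.+1 w -> A n (Psi S n w).

Fixpoint ext (k : nat) : forall n, vert S n -> Prop :=
  match k with
  | 0 => fun n u => A n u
  | k'.+1 => fun n u => A n u /\ exists w : vert S n.+1, Psi S n w = u /\ ext k' n.+1 w
  end.

Lemma ext_A k n u : ext k n u -> A n u.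
Proof. by case: k => [|k] //= []. Qed.

Lemma ext_mono1 k n u : ext k.+1 n u -> ext k n u.
Proof.
elim: k n u => [|k IH] n u /=; first by case.
case=> hA [w [ew hw]]; split => //; exists w; split => //; exact: IH.
Qed.

Lemma ext_mono {n u k k'} : (k <= k')%N -> ext k' n u -> ext k n u.
Proof.
move=> kk'; rewrite -(subnKC kk'); elim: (k' - k)%N => [|j IH]; first by rewrite addn0.
by rewrite addnS => /ext_mono1.
Qed.

Lemma ext_ex k n : exists u, ext k n u.
Proof.
elim: k n => [|k IH] n /=; first exact: A_ne.
case: (IH n.+1) => w hw; exists (Psi S n w); split.
  by apply: A_down; apply: ext_A hw.
by exists w.
Qed.

Definition good n u := forall k, ext k n u.

Lemma good_ex0 : exists u : vert S 0, good 0 u.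
Proof.
apply: contrapT => H.
have [K HK] := @fin_bound (vert S 0) (fun k u => ext k 0 u)
  (fun u k k' kk' => ext_mono kk') H.
by case: (ext_ex K 0) => u /HK.
Qed.

Lemma good_step {n u} : good n u -> exists w : vert S n.+1, Psi S n w = u /\ good n.+1 w.
Proof.
move=> gu; apply: contrapT => H.
have HN : ~ (exists w, forall k, Psi S n w = u /\ ext k n.+1 w).
  by case=> w hw; apply: H; exists w; split; [exact: (hw 0).1 | move=> k; exact: (hw k).2].
have [K HK] := @fin_bound (vert S n.+1) (fun k w => Psi S n w = u /\ ext k n.+1 w)
  (fun w k k' kk' h => conj h.1 (ext_mono kk' h.2)) HN.
by case: (gu K.+1) => _ [w [ew hw]]; apply: (HK w).
Qed.

Fixpoint th (n : nat) : {u : vert S n | good n u} :=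
  match n with
  | 0 => exist _ (projT1 (cid good_ex0)) (projT2 (cid good_ex0))
  | n'.+1 => let p := th n' in
     exist _ (projT1 (cid (good_step (projT2 p)))) (projT2 (cid (good_step (projT2 p)))).2
  end.

Lemma konig : exists x : Pt S, Xset S x /\ forall n, A n (x n).
Proof.
exists (fun n => projT1 (th n)); split.
  move=> n /=; by rewrite (projT2 (cid (good_step (projT2 (th n))))).1.
by move=> n; apply: (projT2 (th n) 0).
Qed.

End Konig.

Lemma HXrel_ex x : Xset S x -> exists y, HXrel S x y.
Proof.
move=> hx.
have [y [hy e]] := @konig (fun n v => edge S n (x n) v) (fun n => out_edge n (x n))
  (fun n w e => ltac:(by rewrite /= hx; apply: Psi_edge)).
by exists y.
Qed.

Lemma HX_spec {x} : Xset S x -> HXrel S x (HX S x).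
Proof.
move=> hx; rewrite /HX; case: pselect => [h|h].
  exact: (projT2 (cid h)).
by exfalso; apply: h; apply: HXrel_ex.
Qed.

Lemma HX_X x : Xset S x -> Xset S (HX S x).
Proof. by move=> /HX_spec [_ []]. Qed.

Lemma HXrel_uniq {x y y'} : HXrel S x y -> HXrel S x y' -> y = y'.
Proof.
move=> [hx [hy ey]] [_ [hy' ey']].
apply: functional_extensionality_dep => m.
case: (condii m) => k [_ /(_ (x (k + m)%N))] [w [_ hw]].
by rewrite -(psik_X m k hy) -(psik_X m k hy') (hw _ (ey _)) (hw _ (ey' _)).
Qed.

Lemma HX_eq x y : HXrel S x y -> HX S x = y.
Proof. move=> h; have hx : Xset S x by case: h.
exact: HXrel_uniq (HX_spec hx) h. Qed.

Lemma HX_surj y : Xset S y -> exists x, Xset S x /\ HX S x = y.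
Proof.
move=> hy.
have [x [hx e]] := @konig (fun n u => edge S n u (y n)) (fun n => in_edge n (y n))
  (fun n w e => ltac:(by rewrite /= hy; apply: Psi_edge)).
by exists x; split => //; apply: HX_eq.
Qed.

Lemma HX_loc m : exists N, forall x z, Xset S x -> Xset S z -> x N = z N ->
  HX S x m = HX S z m.
Proof.
case: (condii m) => k [_ hk]; exists (k + m)%N => x z hx hz e.
have [_ [hX ex]] := HX_spec hx; have [_ [hZ ez]] := HX_spec hz.
case: (hk (x (k + m)%N)) => w [_ hw].
rewrite -(psik_X m k hX) -(psik_X m k hZ) (hw _ (ex _)) hw //.
by rewrite e; apply: ez.
Qed.

Lemma X_down x z m N : Xset S x -> Xset S z -> (m <= N)%N -> x N = z N -> x m = z m.
Proof.
move=> hx hz mN; rewrite -(subnK mN); elim: (N - m)%N => [//|j IH] e.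
by apply: IH; rewrite hx hz /= e.
Qed.

End Comb.


Section Main.
Variable R : realType. Variable S : FData R.
Hypothesis HF : is_Fsystem S.
Hypothesis Hlt : forall n (v : vert S n), phiL S n v < phiU S n v.

Definition aL (x : Pt S) n := phiL S n (x n).
Definition aU (x : Pt S) n := phiU S n (x n).

Lemma PsiL n v : phiL S n (Psi S n v) <= phiL S n.+1 v.
Proof. by case: HF => _ _ _ _ [_ _ h _]; apply: h. Qed.
Lemma PsiU n v : phiU S n.+1 v <= phiU S n (Psi S n v).
Proof. by case: HF => _ _ _ _ [_ h _ _]; apply: h. Qed.

Lemma hlt x n : aL x n < aU x n. Proof. exact: Hlt. Qed.
Lemma hL {x} : Xset S x -> forall n, aL x n <= aL x n.+1.
Proof. move=> hx n; rewrite /aL (hx n); exact: PsiL. Qed.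
Lemma hU {x} : Xset S x -> forall n, aU x n.+1 <= aU x n.
Proof. move=> hx n; rewrite /aU (hx n); exact: PsiU. Qed.

Lemma phi_bounds n v : 0 <= phiL S n v /\ phiL S n v <= phiU S n v /\ phiU S n v <= 1.
Proof. by case: HF => _ _ _ _ [h _ _ _]; apply: h. Qed.

Lemma sn_range {n u} v {t} : phiL S n u <= t -> t <= phiU S n u ->
  phiL S n v <= sn S n u v t <= phiU S n v.
Proof.
move=> h1 h2; rewrite /sn.
have hu := Hlt _ u; have hv := Hlt _ v.
have hr : 0 <= (phiU S n v - phiL S n v) / (phiU S n u - phiL S n u).
  by apply: divr_ge0; rewrite subr_ge0; apply: ltW.
apply/andP; split.
  by rewrite lerDr; apply: mulr_ge0 => //; rewrite subr_ge0.
have hba : phiU S n u - phiL S n u != 0 by rewrite subr_eq0 gt_eqF.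
have e : (phiU S n v - phiL S n v) / (phiU S n u - phiL S n u) *
   (phiU S n u - phiL S n u) = phiU S n v - phiL S n v by rewrite divfK.
have : (phiU S n v - phiL S n v) / (phiU S n u - phiL S n u) * (t - phiL S n u) <=
  (phiU S n v - phiL S n v) / (phiU S n u - phiL S n u) * (phiU S n u - phiL S n u).
  by apply: ler_wpM2l => //; rewrite lerD2r.
rewrite e; lra.
Qed.

Lemma sn_bound {n u} v {u' : vert S n.+1} {t} : Psi S n u' = u ->
  phiL S n.+1 u' <= t -> t <= phiU S n.+1 u' ->
  0 <= sn S n u v t <= 1.
Proof.
move=> eu h1 h2.
have h1' : phiL S n u <= t by rewrite -eu; apply: le_trans (PsiL _ _) h1.
have h2' : t <= phiU S n u by rewrite -eu; apply: le_trans h2 (PsiU _ _).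
have /andP[k1 k2] := sn_range v h1' h2'.
have [b1 [b2 b3]] := phi_bounds n v.
apply/andP; split; [exact: le_trans b1 k1 | exact: le_trans k2 b3].
Qed.

Lemma sn_bound' {n} {u'} (v' : vert S n.+1) {t} :
  phiL S n.+1 u' <= t -> t <= phiU S n.+1 u' ->
  0 <= sn S n.+1 u' v' t <= 1.
Proof.
move=> h1 h2.
have /andP[k1 k2] := sn_range v' h1 h2.
have [b1 [b2 b3]] := phi_bounds n.+1 v'.
apply/andP; split; [exact: le_trans b1 k1 | exact: le_trans k2 b3].
Qed.

Lemma GammaSet_ub n : has_ubound (GammaSet S n).
Proof.
exists 1 => r [u [v [u' [v' [t [_ eu ev [h1 h2] ->]]]]]].
have /andP[a1 a2] := sn_bound v eu h1 h2.
have /andP[b1 b2] := sn_bound' v' h1 h2.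
rewrite ler_norml; apply/andP; split; lra.
Qed.

Lemma GammaPlusSet_ub n : has_ubound (GammaPlusSet S n).
Proof.
exists 1 => r [u [v [u' [v' [t [_ eu ev [h1 h2] ->]]]]]].
have /andP[a1 a2] := sn_bound u ev h1 h2.
have /andP[b1 b2] := sn_bound' u' h1 h2.
rewrite ler_norml; apply/andP; split; lra.
Qed.

Lemma sup_ge0 (E : set R) : has_ubound E -> (forall r, E r -> 0 <= r) -> 0 <= sup E.
Proof.
move=> ub h; case: (pselect (exists r, E r)) => [[r Er]|nE].
  by apply: le_trans (h r Er) (ub_le_sup ub Er).
have -> : E = set0 by apply/seteqP; split => // r Er; exfalso; apply: nE; exists r.
by rewrite sup0.
Qed.

Lemma Gamma_ge0 n : 0 <= Gamma S n.
Proof.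
apply: sup_ge0; first exact: GammaSet_ub.
by move=> r [u [v [u' [v' [t [_ eu ev [h1 h2] ->]]]]]].
Qed.

Lemma GammaPlus_ge0 n : 0 <= GammaPlus S n.
Proof.
apply: sup_ge0; first exact: GammaPlusSet_ub.
by move=> r [u [v [u' [v' [t [_ eu ev [h1 h2] ->]]]]]].
Qed.

Lemma cond_cvg (g : nat -> R) : (forall n, 0 <= g n) ->
  (\sum_(0 <= n <oo) (g n)%:E < +oo)%E -> cvgn (series g).
Proof.
move=> g0 hlt.
set E := (\sum_(0 <= n <oo) (g n)%:E)%E in hlt.
have E0 : (0 <= E)%E by apply: nneseries_ge0 => n _ _; rewrite lee_fin.
have fE : E \is a fin_num by rewrite ge0_fin_numE.
apply: nondecreasing_is_cvgn.
  by apply/nondecreasing_seqP => n; rewrite seriesSr lerDl.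
exists (fine E) => _ [k _ <-].
rewrite -lee_fin fineK //.
have := @nneseries_lim_ge R (fun n => (g n)%:E) xpredT 0%N k.
rewrite /series /= sumEFin; apply => n _ _; rewrite lee_fin; exact: g0.
Qed.


Definition STEP (x y : Pt S) (g : nat -> R) := forall n t, aL x n.+1 <= t -> t <= aU x n.+1 ->
  `|affs (aL x) (aU x) (aL y) (aU y) n t - affs (aL x) (aU x) (aL y) (aU y) n.+1 t| <= g n.

Lemma Gstep {x y} : HXrel S x y -> STEP x y (Gamma S).
Proof.
move=> [hx [hy e]] n t h1 h2.
apply: (ub_le_sup (GammaSet_ub n)).
exists (x n), (y n), (x n.+1), (y n.+1), t; split.
all: try by split; apply: e.
all: try exact: (esym (hx n)).
all: try exact: (esym (hy n)).
all: try by split.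
Qed.

Lemma GPstep {x y} : HXrel S x y -> STEP y x (GammaPlus S).
Proof.
move=> [hx [hy e]] n t h1 h2.
apply: (ub_le_sup (GammaPlusSet_ub n)).
exists (x n), (y n), (x n.+1), (y n.+1), t; split.
all: try by split; apply: e.
all: try exact: (esym (hx n)).
all: try exact: (esym (hy n)).
all: try by split.
Qed.

Section Wrap.
Variables (x y : Pt S) (g : nat -> R).
Hypotheses (hx : Xset S x) (hy : Xset S y) (g0 : forall n, 0 <= g n)
  (gc : cvgn (series g)) (st : STEP x y g).

Lemma w_range t : limn (aL x) <= t -> t <= limn (aU x) ->
  limn (aL y) <= limn (affs (aL x) (aU x) (aL y) (aU y) ^~ t) <= limn (aU y).
Proof. exact: (affs_range_lim _ _ _ _ _ _ (hlt x) (hlt y) (hL hx) (hU hx) (hL hy) (hU hy) g0 gc st t). Qed.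

Lemma w_tail t m : limn (aL x) <= t -> t <= limn (aU x) ->
  `|limn (affs (aL x) (aU x) (aL y) (aU y) ^~ t) - affs (aL x) (aU x) (aL y) (aU y) m t|
    <= tl g m.
Proof. move=> h1 h2;
exact: (affs_tail _ _ _ _ _ _ (hlt x) (hlt y) (hL hx) (hU hx) (hL hy) (hU hy) g0 gc st t h1 h2 m). Qed.

Lemma w_surj r : limn (aL y) <= r -> r <= limn (aU y) ->
  exists t, [/\ limn (aL x) <= t, t <= limn (aU x) &
     limn (affs (aL x) (aU x) (aL y) (aU y) ^~ t) = r].
Proof. exact: (affs_surj _ _ _ _ _ _ (hlt x) (hlt y) (hL hx) (hU hx) (hL hy) (hU hy) g0 gc st r). Qed.

Variable g' : nat -> R.
Hypotheses (g0' : forall n, 0 <= g' n) (gc' : cvgn (series g')) (st' : STEP y x g').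

Lemma w_pair t : limn (aL x) <= t -> t <= limn (aU x) ->
  limn (affs (aL y) (aU y) (aL x) (aU x) ^~
    (limn (affs (aL x) (aU x) (aL y) (aU y) ^~ t))) = t.
Proof. exact: (pair_inv _ _ _ _ _ _ _ (hlt x) (hlt y) (hL hx) (hU hx) (hL hy) (hU hy)
  g0 gc st g0' gc' st' t). Qed.

End Wrap.
Arguments w_range {x y g}.
Arguments w_tail {x y g}.
Arguments w_surj {x y g}.
Arguments w_pair {x y g}.

Definition Loc (b : Pt S -> Pt S) := forall x m, Xset S x ->
  \forall z \near within (Xset S) (nbhs x), b z m = b x m.

Lemma lift_fst (P : Pt S -> Prop) (x : Pt S) (t : R) :
  (\forall z \near within (Xset S) (nbhs x), P z) ->
  \forall q \near within (Fence S) (nbhs (x, t)), P q.1.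
Proof.
rewrite !near_withinE => h.
exists ((fun z => Xset S z -> P z), setT); first by split => //; exact: filterT.
by move=> [z t'] [/= hz _] [hz1 _]; apply: hz.
Qed.

Lemma HX_Loc : Loc (HX S).
Proof.
move=> x m hx; have [N hN] := HX_loc _ _ HF m.
rewrite near_withinE; apply: filterS (nbhs_cyl x N) => z ez hz.
exact: hN hz hx ez.
Qed.

Lemma cont_fst (b : Pt S -> Pt S) (x : Pt S) (t : R) : Loc b -> Xset S x ->
  (fun q : Pt S * R => b q.1) @ within (Fence S) (nbhs (x, t)) --> b x.
Proof.
move=> lb hx; apply: cvg_Pt => m.
exact: (@lift_fst (fun z => b z m = b x m) x t (lb x m hx)).
Qed.

Lemma cont_snd (b : Pt S -> Pt S) (Fz : Pt S -> R -> R) (tlf : nat -> R) :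
  tlf @ \oo --> 0 -> Loc b ->
  (forall z t m, Xset S z -> phiLlim S z <= t -> t <= phiUlim S z ->
     `|Fz z t - sn S m (z m) (b z m) t| <= tlf m) ->
  forall x t, Fence S (x, t) ->
  (fun q : Pt S * R => Fz q.1 q.2) @ within (Fence S) (nbhs (x, t)) --> Fz x t.
Proof.
move=> htl loc tb x t [hx [h1 h2]] /=.
apply/cvgrPdist_le => e e0.
have e3 : 0 < e / 3 by rewrite divr_gt0.
have [m hm] : exists m, tlf m <= e / 3.
  have := (cvgrPdist_le _ _).1 htl _ e3; case=> N _ hN; exists N.
  have := hN N (leqnn N); rewrite sub0r normrN => h.
  exact: le_trans (ler_norm _) h.
set s := (phiU S m (b x m) - phiL S m (b x m)) / (phiU S m (x m) - phiL S m (x m)).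
have s0 : 0 <= s.
  by apply: divr_ge0; rewrite subr_ge0; apply: ltW; apply: Hlt.
have s1 : s + 1 != 0 by rewrite gt_eqF // ltr_wpDl.
set dl := e / 3 / (s + 1).
have dl0 : 0 < dl by rewrite divr_gt0 // ltr_wpDl.
have hdl : dl * (s + 1) = e / 3 by rewrite /dl divfK.
have nb : \forall t' \near t, `|t - t'| < dl.
  exact: (@cvgrPdist_lt _ R^o _ _ _ _ _).1 cvg_id _ dl0.
rewrite near_withinE.
have L1 := loc x m hx; rewrite near_withinE in L1.
exists ((fun z => (Xset S z -> b z m = b x m) /\ z m = x m), (fun t' => is_true (`|t - t'| < dl))).
  split => //=; apply: filterI => //; exact: nbhs_cyl.
move=> [z t'] [/= [hz1 hz2] ht'] [hz [h1' h2']] /=.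
have ebz := hz1 hz.
have T1 := tb x t m hx h1 h2.
have T2 := tb z t' m hz h1' h2'.
rewrite hz2 ebz in T2.
have mid : `|sn S m (x m) (b x m) t - sn S m (x m) (b x m) t'| <= e / 3.
  have -> : sn S m (x m) (b x m) t - sn S m (x m) (b x m) t' = s * (t - t').
    by rewrite /sn /s; ring.
  rewrite normrM (ger0_norm s0).
  apply: le_trans (_ : (s + 1) * dl <= _); last by rewrite mulrC hdl.
  apply: le_trans (_ : (s + 1) * `|t - t'| <= _).
    by apply: ler_wpM2r => //; rewrite lerDl.
  by apply: ler_wpM2l; [apply: addr_ge0 | apply: ltW].
move: T1 T2 mid; rewrite !ler_norml => /andP[a1 a2] /andP[b1 b2] /andP[c1 c2].
apply/andP; split; lra.
Qed.


Lemma HXs {x} : Xset S x -> HXrel S x (HX S x). Proof. exact: HX_spec. Qed.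
Lemma HXX {x} : Xset S x -> Xset S (HX S x). Proof. exact: HX_X. Qed.

Lemma tl_to0 (g : nat -> R) : cvgn (series g) -> tl g @ \oo --> 0.
Proof.
move=> hgc; rewrite /tl -(subrr (limn (series g))).
by apply: cvgB; [exact: cvg_cst | exact: hgc].
Qed.

Lemma cont_pair (b : Pt S -> Pt S) (Fz : Pt S -> R -> R) (tlf : nat -> R) :
  tlf @ \oo --> 0 -> Loc b ->
  (forall z t m, Xset S z -> phiLlim S z <= t -> t <= phiUlim S z ->
     `|Fz z t - sn S m (z m) (b z m) t| <= tlf m) ->
  {within Fence S, continuous (fun q : Pt S * R => (b q.1, Fz q.1 q.2))}.
Proof.
move=> htl lb tb; apply/subspace_continuousP => -[x t] hp.
rewrite /from_subspace /=.
apply: (@cvg_pair _ _ _ _ (nbhs (b x)) (nbhs (Fz x t)) _ _ _ (fun q => b q.1) (fun q => Fz q.1 q.2)).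
  by apply: cont_fst => //; case: hp.
exact: cont_snd htl lb tb x t hp.
Qed.

Hypothesis HG : CondGamma S.

Lemma Gc : cvgn (series (Gamma S)).
Proof. exact: cond_cvg Gamma_ge0 HG. Qed.

Lemma T_maps p : Fence S p -> Fence S (Tmap S p).
Proof.
case: p => x t [hx [h1 h2]]; split; first exact: HXX.
have := w_range hx (HXX hx) Gamma_ge0 Gc (Gstep (HXs hx)) _ h1 h2.
by move/andP.
Qed.

Lemma T_cont : {within Fence S, continuous (Tmap S)}.
Proof.
have tb : forall z t m, Xset S z -> phiLlim S z <= t -> t <= phiUlim S z ->
     `|Defs.sfun S z t - sn S m (z m) (HX S z m) t| <= tl (Gamma S) m.
  move=> z t m hz h1 h2.
  exact: (w_tail hz (HXX hz) Gamma_ge0 Gc (Gstep (HXs hz)) t m h1 h2).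
have h := cont_pair _ _ _ (tl_to0 _ Gc) HX_Loc tb.
exact: h.
Qed.

Lemma T_surj q : Fence S q -> exists2 p, Fence S p & Tmap S p = q.
Proof.
case: q => y r [/= hy [h1 h2]].
have [x [hx ex]] := HX_surj _ _ HF _ hy.
have hxy : HXrel S x y by rewrite -ex; exact: HXs.
have [t [t1 t2 et]] := w_surj hx hy Gamma_ge0 Gc (Gstep hxy) _ h1 h2.
exists (x, t); first by split.
by rewrite /Tmap /Defs.sfun /= ex -et.
Qed.


Section Homeo.
Hypothesis HGP : CondGammaPlus S.
Variable g0 : Pt S -> Pt S.
Hypothesis g0X : forall a, Xset S a -> Xset S (g0 a).
Hypothesis gf : forall a, Xset S a -> g0 (HX S a) = a.
Hypothesis fg : forall a, Xset S a -> HX S (g0 a) = a.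
Hypothesis gcont : {within Xset S, continuous g0}.

Lemma GPc : cvgn (series (GammaPlus S)).
Proof. exact: cond_cvg GammaPlus_ge0 HGP. Qed.

Lemma g0_Loc : Loc g0.
Proof.
move=> x m hx.
have := (subspace_continuousP _ _).1 gcont x hx.
by move/(_ _ (nbhs_cyl (g0 x) m)).
Qed.

Lemma hr {y} : Xset S y -> HXrel S (g0 y) y.
Proof. by move=> hy; have := HXs (g0X _ hy); rewrite fg. Qed.

Definition Fz' (y : Pt S) (r : R) := limn (fun n => sn S n (y n) (g0 y n) r).
Definition Ginv (q : Pt S * R) := (g0 q.1, Fz' q.1 q.2).

Lemma Ginv_maps q : Fence S q -> Fence S (Ginv q).
Proof.
case: q => y r [/= hy [h1 h2]]; split; first exact: g0X.
have := w_range hy (g0X _ hy) GammaPlus_ge0 GPc (GPstep (hr hy)) _ h1 h2.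
by move/andP.
Qed.

Lemma Ginv_cont : {within Fence S, continuous Ginv}.
Proof.
have tb : forall z t m, Xset S z -> phiLlim S z <= t -> t <= phiUlim S z ->
     `|Fz' z t - sn S m (z m) (g0 z m) t| <= tl (GammaPlus S) m.
  move=> z t m hz h1 h2.
  exact: (w_tail hz (g0X _ hz) GammaPlus_ge0 GPc (GPstep (hr hz)) t m h1 h2).
have h := cont_pair _ _ _ (tl_to0 _ GPc) g0_Loc tb.
exact: h.
Qed.

Lemma GT p : Fence S p -> Ginv (Tmap S p) = p.
Proof.
case: p => x t [/= hx [h1 h2]].
rewrite /Ginv /Tmap /= gf //; congr pair.
rewrite /Fz' /Defs.sfun gf //.
exact: (w_pair hx (HXX hx) Gamma_ge0 Gc (Gstep (HXs hx)) _ GammaPlus_ge0 GPc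
  (GPstep (HXs hx)) t h1 h2).
Qed.

Lemma TG q : Fence S q -> Tmap S (Ginv q) = q.
Proof.
case: q => y r [/= hy [h1 h2]].
rewrite /Ginv /Tmap /= fg //; congr pair.
rewrite /Fz' /Defs.sfun fg //.
exact: (w_pair hy (g0X _ hy) GammaPlus_ge0 GPc (GPstep (hr hy)) _ Gamma_ge0 Gc
  (Gstep (hr hy)) r h1 h2).
Qed.

End Homeo.
End Main.

Theorem theorem8p1 (R : realType) (S : FData R) :
  is_Fsystem S ->
  (forall n (v : vert S n), phiL S n v < phiU S n v) ->
  CondGamma S ->
  [/\ (forall p, Fence S p -> Fence S (Tmap S p)),
      {within Fence S, continuous (Tmap S)},
      (forall q, Fence S q -> exists2 p, Fence S p & Tmap S p = q),
      (forall p, Fence S p -> (Tmap S p).1 = HX S p.1) &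
      (CondGammaPlus S -> homeo_on (Xset S) (HX S) ->
         homeo_on (Fence S) (Tmap S))].
Proof.
move=> HF Hlt HG; split.
- exact: T_maps.
- exact: T_cont.
- exact: T_surj.
- by [].
move=> HGP [_ _ [g0 [g0X gf fg gcont]]]; split.
- exact: T_maps.
- exact: T_cont.
exists (Ginv _ _ g0); split.
- exact: Ginv_maps.
- exact: GT.
- exact: TG.
- exact: Ginv_cont.
Qed.
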